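(* Let $F$ be a field of characteristic different from $2$, let $a_1,a_2\in F^\times$ be such that $E=F(\sqrt{a_1},\sqrt{a_2})$ is Galois over $F$ with $G=\mathrm{Gal}(E/F)\cong\mathbb Z/2\mathbb Z\times\mathbb Z/2\mathbb Z$, and let $\sigma_1,\sigma_2\in G$ be the generators with $\sigma_1(\sqrt{a_1})=\sqrt{a_1}$, $\sigma_1(\sqrt{a_2})=-\sqrt{a_2}$, $\sigma_2(\sqrt{a_2})=\sqrt{a_2}$, $\sigma_2(\sqrt{a_1})=-\sqrt{a_1}$. Let $E_1=F(\sqrt{a_1})$, $E_2=F(\sqrt{a_2})$, $E_3=F(\sqrt{a_1a_2})$. Then the following five subsets of $E^\times$ are equal: \begin{align*} K_1&=\ker(1-\sigma_1)(1-\sigma_2)=\{e\in E^\times: e\,\sigma_1\sigma_2(e)=\sigma_1(e)\,\sigma_2(e)\},\\ K_2&=\ker(1-\sigma_1)\cdot\ker(1-\sigma_2),\\ K_3&=\langle E_1^\times,E_2^\times\rangle,\\ K_4&=\{e\in E^\times: N_{E/E_3}(e)\in F^\times\},\\ K_5&=\{e\in E^\times: N_{E/E_3}(e)\in N_{E_1/F}(E_1^\times)\cdot N_{E_2/F}(E_2^\times)\}. \end{align*}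
   Context: $\ker(1-\sigma_i)=\{e\in E^\times: e/\sigma_i(e)=1\}$. For subsets $A,B$ of a multiplicative group, $A\cdot B=\{ab:a\in A,b\in B\}$. $\langle E_1^\times,E_2^\times\rangle$ is the smallest subgroup of $E^\times$ containing $E_1^\times$ and $E_2^\times$. $N_{E/E_3}(e)=e\,\sigma_1\sigma_2(e)$ (note $\mathrm{Gal}(E/E_3)=\{\mathrm{id},\sigma_1\sigma_2\}$), and for $x\in E_i^\times$, $N_{E_i/F}(x)=x\,\bar x$ where $\bar x$ is the conjugate of $x$ over $F$ (i.e. $N_{E_i/F}(f+g\sqrt{a_i})=f^2-a_ig^2$). *)

(* Defs.v *)
From HB Require Import structures.
From mathcomp Require Import all_boot all_order all_algebra all_fingroup all_field.
Set Implicit Arguments. Unset Strict Implicit. Unset Printing Implicit Defensive.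
Import GRing.Theory.
Local Open Scope ring_scope.

Definition units_of (F0 : fieldType) (L : fieldExtType F0) (U : {vspace L}) (x : L) : Prop :=
  x \in U /\ x != 0.

Definition is_mult_subgroup (F0 : fieldType) (L : fieldExtType F0) (S : L -> Prop) : Prop :=
  [/\ forall x, S x -> x != 0, S 1,
      forall x y, S x -> S y -> S (x * y) & forall x, S x -> S x^-1].

Definition gen_mult_subgroup (F0 : fieldType) (L : fieldExtType F0) (A B : L -> Prop)
  (x : L) : Prop :=
  forall S : L -> Prop, is_mult_subgroup S ->
    (forall y, A y -> S y) -> (forall y, B y -> S y) -> S x.

(* Main.v *)
Require Import Defs.
From HB Require Import structures.
From mathcomp Require Import all_boot all_order all_algebra all_fingroup all_field.
From mathcomp Require Import ring.
Import GRing.Theory.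
Local Open Scope ring_scope.

Section S.
Variables (F : fieldType) (L : splittingFieldType F).

Lemma sq_decomp (K : {subfield L}) (x a y : L) : a \in K -> x ^+ 2 = a ->
  y \in <<K; x>>%VS -> exists c0, exists c1, [/\ c0 \in K, c1 \in K & y = c0 + c1 * x].
Proof.
move=> Ka xa Ey.
have hd : (adjoin_degree K x <= 2)%N.
  have := size_minPoly K x.
  have hdv : minPoly K x %| ('X^2 - a%:P).
    apply: minPoly_dvdp.
      by rewrite rpredB ?rpredX ?polyOverX ?polyOverC.
    by rewrite /root !hornerE xa subrr.
  have := dvdp_leq _ hdv; rewrite size_XnsubC // => h.
  have nz : 'X^2 - a%:P != 0 :> {poly L}.
    by rewrite -size_poly_eq0 size_XnsubC.
  by move/(_ nz): h => h hs; rewrite hs ltnS in h.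
set p := Fadjoin_poly K x y.
have Kp : p \is a polyOver K := Fadjoin_polyOver K x y.
have sp : (size p <= 2)%N := leq_trans (size_Fadjoin_poly K x y) hd.
exists p`_0, p`_1; split; try exact: (polyOverP Kp).
rewrite -(Fadjoin_poly_eq Ey) -/p (horner_coef_wide _ sp).
by rewrite !big_ord_recr big_ord0 /= add0r expr0 mulr1 expr1.
Qed.


Lemma aend_fix1 (f : 'AEnd(L)) (k : L) : k \in 1%VS -> f k = k.
Proof. by move: k; apply/kAHomP; apply: (k1AHom fullv f). Qed.

Lemma aend_sign (f : 'AEnd(L)) r (a : F) : r ^+ 2 = a%:A -> f r = r \/ f r = - r.
Proof.
move=> hr; have h : f r ^+ 2 = r ^+ 2.
  by rewrite -rmorphXn hr; apply: aend_fix1; rewrite rpredZ // mem1v.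
have : (f r - r) * (f r + r) == 0.
  by rewrite mulrDr !mulrBl -!expr2 h [r * f r]mulrC addrA subrK subrr.
rewrite mulf_eq0 => /orP[/eqP hh|/eqP hh]; [left|right].
  by apply/eqP; rewrite -subr_eq0 hh.
by apply/eqP; rewrite -addr_eq0 hh.
Qed.

Lemma aend_eval (f : 'AEnd(L)) (a b c d x z : L) : a \in 1%VS -> b \in 1%VS -> c \in 1%VS -> d \in 1%VS ->
  f (a + b * x + (c + d * x) * z) = a + b * f x + (c + d * f x) * f z.
Proof.
move=> ha hb hc hd.
have fD : forall u v : L, f (u + v) = f u + f v := rmorphD f.
have fM : forall u v : L, f (u * v) = f u * f v := rmorphM f.
by rewrite !fD !fM !fD !fM (aend_fix1 f a ha) (aend_fix1 f b hb) (aend_fix1 f c hc) (aend_fix1 f d hd).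
Qed.

Lemma two_L : (2%:R : L) != 0 -> forall w : L, w = - w -> w = 0.
Proof.
move=> h2 w hw; apply/eqP; have : w * 2%:R == 0.
  by rewrite mulr_natr mulr2n {1}hw addNr.
by rewrite mulf_eq0 (negPf h2) orbF.
Qed.


Lemma aend_N (f : 'AEnd(L)) (u : L) : f (- u) = - f u.
Proof. exact: (rmorphN f u). Qed.
Lemma aend_M (f : 'AEnd(L)) (u v : L) : f (u * v) = f u * f v.
Proof. exact: (rmorphM f u v). Qed.
Lemma aend_V (f : 'AEnd(L)) (u : L) : f (u^-1) = (f u)^-1.
Proof. exact: (fmorphV f u). Qed.
Lemma aend_1 (f : 'AEnd(L)) : f 1 = 1.
Proof. exact: (rmorph1 f). Qed.
Lemma aend_eq0 (f : 'AEnd(L)) (u : L) : (f u == 0) = (u == 0).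
Proof. exact: (fmorph_eq0 f u). Qed.

Lemma aend_eval2 (f : 'AEnd(L)) (a b x : L) : a \in 1%VS -> b \in 1%VS ->
  f (a + b * x) = a + b * f x.
Proof.
move=> ha hb.
have fD : forall u v : L, f (u + v) = f u + f v := rmorphD f.
by rewrite fD aend_M (aend_fix1 f a ha) (aend_fix1 f b hb).
Qed.

Lemma in_adj (a b x : L) : a \in 1%VS -> b \in 1%VS -> a + b * x \in <<1; x>>%VS.
Proof.
move=> ha hb; rewrite rpredD ?rpredM ?memv_adjoin //; exact: (subvP (subv_adjoin _ _)).
Qed.

Variables (a1 a2 : F) (r1 r2 : L) (s1 s2 : gal_of (fullv : {vspace L})).
Hypotheses (h2 : 2%:R != 0 :> F) (ha1 : a1 != 0) (ha2 : a2 != 0)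
  (hr1 : r1 ^+ 2 = a1%:A) (hr2 : r2 ^+ 2 = a2%:A)
  (hfull : <<<<1; r1>>; r2>>%VS = fullv)
  (s1r1 : s1 r1 = r1) (s1r2 : s1 r2 = - r2) (s2r2 : s2 r2 = r2) (s2r1 : s2 r1 = - r1).

Lemma h2L : (2%:R : L) != 0.
Proof. by rewrite -(rmorph_nat (in_alg L)) fmorph_eq0. Qed.

Lemma neqN (u : L) : u != 0 -> u != - u.
Proof. by apply: contra => /eqP /(two_L h2L) ->. Qed.

Lemma r_nz (r : L) (a : F) : a != 0 -> r ^+ 2 = a%:A -> r != 0.
Proof.
move=> ha hr; apply/eqP => h; move: hr; rewrite h expr0n /= => /esym/eqP.
by rewrite scaler_eq0 oner_eq0 orbF (negPf ha).
Qed.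

Lemma decomp y : exists a b c d : L,
  [/\ a \in 1%VS, b \in 1%VS, c \in 1%VS, d \in 1%VS & y = a + b * r1 + (c + d * r1) * r2].
Proof.
have Ey : y \in <<<<1; r1>>; r2>>%VS by rewrite hfull memvf.
have K2 : a2%:A \in (<<1; r1>>%AS : {subfield L}) by rewrite rpredZ // mem1v.
have [c0 [c1 [K0 K1 ->]]] := sq_decomp _ _ _ _ K2 hr2 Ey.
have K1' : a1%:A \in (1%AS : {subfield L}) by rewrite rpredZ // mem1v.
have [a [b [ha hb ->]]] := sq_decomp _ _ _ _ K1' hr1 K0.
have [c [d [hc hd ->]]] := sq_decomp _ _ _ _ K1' hr1 K1.
by exists a, b, c, d.
Qed.

Lemma s1_inv y : s1 (s1 y) = y.
Proof.
have [a [b [c [d [ha hb hc hd ->]]]]] := decomp y.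
rewrite aend_eval // s1r1 s1r2 aend_eval //.
by rewrite s1r1 aend_N s1r2 opprK.
Qed.

Lemma s2_inv y : s2 (s2 y) = y.
Proof.
have [a [b [c [d [ha hb hc hd ->]]]]] := decomp y.
rewrite aend_eval // s2r1 s2r2 aend_eval //.
by rewrite aend_N s2r1 s2r2 opprK.
Qed.

Lemma s_comm y : s1 (s2 y) = s2 (s1 y).
Proof.
have [a [b [c [d [ha hb hc hd ->]]]]] := decomp y.
rewrite aend_eval // s2r1 s2r2 aend_eval // [s1 (_ + _)]aend_eval // s1r1 s1r2.
rewrite aend_eval //.
by rewrite !aend_N s1r1 s2r2 s2r1.
Qed.

Lemma fix1 y : s1 y = y -> y \in <<1; r1>>%VS.
Proof.
have [a [b [c [d [ha hb hc hd ->]]]]] := decomp y.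
rewrite aend_eval // s1r1 s1r2 => h.
have : (c + d * r1) * r2 = - ((c + d * r1) * r2).
  by apply: (addrI (a + b * r1)); rewrite -mulrN h.
by move/(two_L h2L) ->; rewrite addr0 in_adj.
Qed.

Lemma fix2 y : s2 y = y -> y \in <<1; r2>>%VS.
Proof.
have [a [b [c [d [ha hb hc hd ->]]]]] := decomp y.
rewrite aend_eval // s2r1 s2r2 => h.
have e1 : a + b * r1 + (c + d * r1) * r2 = (a + c * r2) + (b * r1 + d * r1 * r2).
  by rewrite mulrDl -!addrA; congr (_ + _); rewrite addrC -!addrA; congr (_ + _); rewrite addrC.
have e2 : a + b * - r1 + (c + d * - r1) * r2 = (a + c * r2) - (b * r1 + d * r1 * r2).
  by rewrite e1 in h *; rewrite !mulrN mulrDl opprD mulNr -!addrA; congr (_ + _);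
     rewrite addrC -!addrA; congr (_ + _); rewrite addrC.
rewrite e2 e1 in h *.
have : b * r1 + d * r1 * r2 = - (b * r1 + d * r1 * r2).
  by apply: (addrI (a + c * r2)); rewrite h.
by move/(two_L h2L) ->; rewrite addr0 in_adj.
Qed.

Lemma fix12 y : s1 y = y -> s2 y = y -> y \in 1%VS.
Proof.
have [a [b [c [d [ha hb hc hd ->]]]]] := decomp y.
rewrite aend_eval // s1r1 s1r2 => h.
have : (c + d * r1) * r2 = - ((c + d * r1) * r2).
  by apply: (addrI (a + b * r1)); rewrite -mulrN h.
move/(two_L h2L) ->; rewrite addr0 aend_eval2 // s2r1 => h'.
have : b * r1 = - (b * r1) by apply: (addrI a); rewrite -mulrN h'.
by move/(two_L h2L) ->; rewrite addr0.
Qed.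

Lemma adj_fix (r : L) (a : F) (s : gal_of (fullv : {vspace L})) :
  r ^+ 2 = a%:A -> s r = r -> forall y, y \in <<1; r>>%VS -> s y = y.
Proof.
move=> hr sr y Ey.
have hK : a%:A \in (1%AS : {subfield L}) by rewrite rpredZ // mem1v.
have [c0 [c1 [h0 h1 ->]]] := sq_decomp _ _ _ _ hK hr Ey.
by rewrite aend_eval2 // sr.
Qed.

Lemma adj_stab (r : L) (a : F) (s : gal_of (fullv : {vspace L})) :
  r ^+ 2 = a%:A -> s r = - r -> forall y, y \in <<1; r>>%VS -> s y \in <<1; r>>%VS.
Proof.
move=> hr sr y Ey.
have hK : a%:A \in (1%AS : {subfield L}) by rewrite rpredZ // mem1v.
have [c0 [c1 [h0 h1 ->]]] := sq_decomp _ _ _ _ hK hr Ey.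
by rewrite aend_eval2 // sr mulrN -mulNr in_adj // rpredN.
Qed.

Lemma normE (r : L) (a : F) (s : gal_of (fullv : {vspace L})) :
  a != 0 -> r ^+ 2 = a%:A -> s r = - r ->
  forall x, x \in <<1; r>>%VS -> galNorm 1 <<1; r>>%VS x = x * s x.
Proof.
move=> ha hr sr x Ex.
have hK : a%:A \in (1%AS : {subfield L}) by rewrite rpredZ // mem1v.
have sE : (s @: <<1; r>> <= <<1; r>>)%VS.
  by apply/subvP => _ /memv_imgP[y Ey ->]; apply: (adj_stab _ _ _ hr sr).
pose c := gal <<1; r>>%VS s.
have cE : {in <<1; r>>%VS, c =1 s} := galK sE.
have all2 : forall g : gal_of <<1; r>>%VS, g = 1%g \/ g = c.
  move=> g; have [gr|gr] := aend_sign g _ _ hr; [left|right]; apply/eqP/gal_eqP => y Ey;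
  have [c0 [c1 [h0 h1 ->]]] := sq_decomp _ _ _ _ hK hr Ey.
    by rewrite gal_id aend_eval2 // gr.
  by rewrite cE ?in_adj // !aend_eval2 // gr sr.
have rnz := r_nz _ _ ha hr.
have cn1 : c != 1%g.
  apply/eqP => hc; have h := gal_id <<1; r>>%VS r.
  rewrite -hc cE ?memv_adjoin // sr in h.
  by move: (neqN _ rnz); rewrite h eqxx.
have cG : c \in 'Gal(<<1; r>>%VS / 1%VS)%g.
  by rewrite gal_kHom ?sub1v // k1AHom.
rewrite /galNorm (bigD1 1%g) ?group1 //= (bigD1 c) /=; last by rewrite cG cn1.
rewrite big1 ?mulr1 => [|g /andP[/andP[_ g1] gc]]; last first.
  by case: (all2 g) => hg; [rewrite hg eqxx in g1 | rewrite hg eqxx in gc].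
by rewrite gal_id cE.
Qed.

Lemma norm3 e : galNorm <<1; r1 * r2>>%VS fullv e = e * s1 (s2 e).
Proof.
pose t := (s2 * s1)%g.
have tE : forall y, t y = s1 (s2 y) by move=> y; rewrite /t galM ?memvf.
have r12 : (r1 * r2) ^+ 2 = (a1 * a2)%:A.
  by rewrite exprMn hr1 hr2 -scalerAl mul1r scalerA.
have hK : (a1 * a2)%:A \in (1%AS : {subfield L}) by rewrite rpredZ // mem1v.
have r1nz := r_nz _ _ ha1 hr1.
have r2nz := r_nz _ _ ha2 hr2.
have tG : t \in 'Gal(fullv / <<1; r1 * r2>>%VS)%g.
  rewrite gal_kHom ?subvf //; apply/kAHomP => y Ey.
  have [c0 [c1 [h0 h1 ->]]] := sq_decomp _ _ _ _ hK r12 Ey.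
  by rewrite aend_eval2 // tE aend_M s2r1 s2r2 aend_M aend_N s1r1 s1r2 mulrNN.
have gal3 : forall g, g \in 'Gal(fullv / <<1; r1 * r2>>%VS)%g -> g = 1%g \/ g = t.
  move=> g gG.
  have gf : g (r1 * r2) = r1 * r2 := fixed_gal (subvf _) gG (memv_adjoin _ _).
  have [g1|g1] := aend_sign g _ _ hr1; have [g2|g2] := aend_sign g _ _ hr2.
  - left; apply/eqP/gal_eqP => y _.
    have [a [b [c [d [ha hb hc hd ->]]]]] := decomp y.
    by rewrite gal_id aend_eval // g1 g2.
  - exfalso; rewrite aend_M g1 g2 mulrN in gf.
    by move: (neqN _ (mulf_neq0 r1nz r2nz)); rewrite gf eqxx.
  - exfalso; rewrite aend_M g1 g2 mulNr in gf.
    by move: (neqN _ (mulf_neq0 r1nz r2nz)); rewrite gf eqxx.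
  - right; apply/eqP/gal_eqP => y _.
    have [a [b [c [d [ha hb hc hd ->]]]]] := decomp y.
    rewrite tE aend_eval // g1 g2 aend_eval // s2r1 s2r2 aend_eval //.
    by rewrite aend_N s1r1 s1r2.
have tn1 : t != 1%g.
  apply/eqP => ht; have h := gal_id (fullv : {vspace L}) r1.
  rewrite -ht tE s2r1 aend_N s1r1 in h.
  by move: (neqN _ r1nz); rewrite h eqxx.
rewrite /galNorm (bigD1 1%g) ?group1 //= (bigD1 t) /=; last by rewrite tG tn1.
rewrite big1 ?mulr1 => [|g /andP[/andP[gG g1] gt]]; last first.
  by case: (gal3 g gG) => hg; [rewrite hg eqxx in g1 | rewrite hg eqxx in gt].
by rewrite gal_id tE.
Qed.

Definition K1p (e : L) := e != 0 /\ e * s1 (s2 e) = s1 e * s2 e.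

Lemma s1s2_nz (e : L) : e != 0 -> s1 (s2 e) != 0.
Proof. by move=> h; rewrite !aend_eq0. Qed.

Lemma L12 (e : L) : K1p e <-> exists x y : L,
      [/\ x != 0 /\ s1 x = x, y != 0 /\ s2 y = y & e = x * y].
Proof.
split.
  move=> [enz h].
  have s2nz : s2 e != 0 by rewrite aend_eq0.
  have s12nz := s1s2_nz _ enz.
  pose z := e / s2 e.
  have hz1 : s1 z = z.
    rewrite /z aend_M aend_V; apply/eqP; rewrite eqr_div //.
    by rewrite h.
  have hz2 : s2 z * z = 1.
    rewrite /z aend_M aend_V s2_inv; field.
    by apply/andP; split; [exact: s2nz | exact: enz].
  have [w [wnz w1 w2]] : exists w : L, [/\ w != 0, s1 w = w & s2 w * z = w].
    have [zm|zm] := eqVneq z (-1).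
      exists r1; split; first exact: r_nz _ _ ha1 hr1.
        exact: s1r1.
      by rewrite s2r1 zm mulrNN mulr1.
    exists (1 + z); split.
    - by rewrite addrC addr_eq0.
    - have fD : forall u v : L, s1 (u + v) = s1 u + s1 v := rmorphD s1.
      by rewrite fD aend_1 hz1.
    - have fD : forall u v : L, s2 (u + v) = s2 u + s2 v := rmorphD s2.
      by rewrite fD aend_1 mulrDl hz2 mul1r addrC.
  have s2wnz : s2 w != 0 by rewrite aend_eq0.
  exists w, (e / w); split => //.
    split; first by rewrite mulf_neq0 // invr_neq0.
    rewrite aend_M aend_V -{2}w2 /z; field.
    by apply/and3P; split; [exact: s2nz | exact: enz | exact: s2wnz].
  by field.
move=> [x [y [[xnz sx] [ynz sy] ->]]]; split; first by rewrite mulf_neq0.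
have hx : s1 (s2 x) = s2 x by rewrite s_comm sx.
rewrite !aend_M hx sy sx; ring.
Qed.

Lemma L13 (e : L) : K1p e <->
  gen_mult_subgroup (units_of <<1; r1>>%VS) (units_of <<1; r2>>%VS) e.
Proof.
split.
  move=> /L12 [x [y [[xnz sx] [ynz sy] ->]]] S [S0 S1 SM SV] hA hB.
  apply: SM; [apply: hA | apply: hB]; split => //; [exact: fix1 | exact: fix2].
move=> H; apply: H.
- split.
  + by move=> x [].
  + by split; [exact: oner_neq0 | rewrite !aend_1].
  + move=> x y [xnz hx] [ynz hy]; split; first by rewrite mulf_neq0.
    by rewrite !aend_M mulrACA hx hy mulrACA.
  + move=> x [xnz hx]; split; first by rewrite invr_neq0.
    by rewrite !aend_V -!invfM hx.
- move=> y [Ey ynz]; split => //.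
  have h1 : s1 y = y := adj_fix _ _ _ hr1 s1r1 y Ey.
  by rewrite s_comm h1.
- move=> y [Ey ynz]; split => //.
  have h2' : s2 y = y := adj_fix _ _ _ hr2 s2r2 y Ey.
  by rewrite h2' mulrC.
Qed.

Lemma L14 (e : L) : K1p e <->
  e != 0 /\ units_of (1%VS : {vspace L}) (galNorm <<1; r1 * r2>>%VS fullv e).
Proof.
rewrite norm3; split.
  move=> [enz h]; split => //; split; last by rewrite mulf_neq0 // s1s2_nz.
  apply: fix12.
    by rewrite aend_M s1_inv h.
  by rewrite aend_M -s_comm s2_inv h mulrC.
move=> [enz [N1 _]]; split => //.
have := aend_fix1 s1 _ N1.
by rewrite aend_M s1_inv => ->.
Qed.

Lemma L15 (e : L) : K1p e <->
  e != 0 /\ exists x y : L,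
      [/\ units_of <<1; r1>>%VS x, units_of <<1; r2>>%VS y &
          galNorm <<1; r1 * r2>>%VS fullv e =
            galNorm 1 <<1; r1>>%VS x * galNorm 1 <<1; r2>>%VS y].
Proof.
split.
  move=> hK; have [enz _] := hK.
  move: hK => /L12 [x [y [[xnz sx] [ynz sy] ee]]].
  have Ex := fix1 _ sx; have Ey := fix2 _ sy.
  split => //; exists x, y; split => //.
  rewrite norm3 (normE _ _ _ ha1 hr1 s2r1 x Ex) (normE _ _ _ ha2 hr2 s1r2 y Ey).
  have hx : s1 (s2 x) = s2 x by rewrite s_comm sx.
  rewrite ee !aend_M hx sy; ring.
move=> [enz [x [y [[Ex xnz] [Ey ynz] hN]]]].
apply/L14; split => //.
rewrite hN (normE _ _ _ ha1 hr1 s2r1 x Ex) (normE _ _ _ ha2 hr2 s1r2 y Ey).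
split; last by rewrite !mulf_neq0 // aend_eq0.
have sx : s1 x = x := adj_fix _ _ _ hr1 s1r1 x Ex.
have sy : s2 y = y := adj_fix _ _ _ hr2 s2r2 y Ey.
apply: fix12.
  rewrite !aend_M sx s_comm sx s1_inv; ring.
rewrite !aend_M sy -s_comm sy s2_inv; ring.
Qed.

End S.

Theorem theorem4 (F : fieldType) (L : splittingFieldType F) (a1 a2 : F)
  (r1 r2 : L) (s1 s2 : gal_of fullv) :
  (2%:R != 0 :> F) -> a1 != 0 -> a2 != 0 ->
  r1 ^+ 2 = a1%:A -> r2 ^+ 2 = a2%:A ->
  (* E = F(sqrt a1, sqrt a2) is the whole of L *)
  <<<<1; r1>>; r2>>%VS = fullv ->
  galois 1 (fullv : {vspace L}) ->
  ('Gal((fullv : {vspace L}) / 1) \isog [set: 'Z_2 * 'Z_2])%g ->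
  s1 \in 'Gal(fullv / 1)%g -> s2 \in 'Gal(fullv / 1)%g ->
  s1 r1 = r1 -> s1 r2 = - r2 -> s2 r2 = r2 -> s2 r1 = - r1 ->
  let E1 := <<1; r1>>%VS in
  let E2 := <<1; r2>>%VS in
  let E3 := <<1; r1 * r2>>%VS in
  let K1 := fun e : L => e != 0 /\ e * s1 (s2 e) = s1 e * s2 e in
  let K2 := fun e : L => exists x y : L,
      [/\ x != 0 /\ s1 x = x, y != 0 /\ s2 y = y & e = x * y] in
  let K3 := gen_mult_subgroup (units_of E1) (units_of E2) in
  let K4 := fun e : L => e != 0 /\ units_of (1%VS : {vspace L}) (galNorm E3 fullv e) in
  let K5 := fun e : L => e != 0 /\ exists x y : L,
      [/\ units_of E1 x, units_of E2 y &
          galNorm E3 fullv e = galNorm 1 E1 x * galNorm 1 E2 y] in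
  forall e : L,
    (K1 e <-> K2 e) /\ (K1 e <-> K3 e) /\ (K1 e <-> K4 e) /\ (K1 e <-> K5 e).
Proof.
move=> h2 ha1 ha2 hr1 hr2 hfull _ _ _ _ s1r1 s1r2 s2r2 s2r1 E1 E2 E3 K1 K2 K3 K4 K5 e.
split; [|split; [|split]].
- by apply: (L12 F L a1 a2 r1 r2 s1 s2).
- by apply: (L13 F L a1 a2 r1 r2 s1 s2).
- by apply: (L14 F L a1 a2 r1 r2 s1 s2).
- by apply: (L15 F L a1 a2 r1 r2 s1 s2).
Qed.
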